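(* Let $n\ge1$, let $(p_j,u_j)$, $0\le j\le n$, be the coordinates of the trajectory $T_n$, and put $\|j\|=\min(j,n-j)$. Then for $0\le j\le n$, $$|p_j-1|\le 2^{-\|j\|}\qquad\text{and}\qquad 0<1-p_ju_j\le \phi\,2^{-\|j\|},$$ where $\phi=(1+\sqrt5)/2$.
   Context: $\Phi$ is the partial map of $\mathbb{R}^2$ defined for $p\ne0$ by $\Phi(p,u)=\bigl(p^2(u+1)-1,\ 1/p\bigr)$. For $n\ge1$, the trajectory $T_n$ is the (existing and unique) finite sequence $(p_j,u_j)$, $j=0,\dots,n$, with $(p_j,u_j)=\Phi(p_{j-1},u_{j-1})$ for $1\le j\le n$, $u_0=0$, $p_n=0$, and $p_j>0$ for $0\le j\le n-1$. *)

(* Defs.v *)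
From Stdlib Require Export Reals.
Open Scope R_scope.

(* The partial map Phi(p,u) = (p^2 (u+1) - 1, 1/p), meaningful for p <> 0. *)
Definition Phi (x : R * R) : R * R :=
  let (p, u) := x in (p ^ 2 * (u + 1) - 1, / p).

Definition is_trajectory (n : nat) (p u : nat -> R) : Prop :=
  (forall j : nat, (1 <= j <= n)%nat -> (p j, u j) = Phi (p (j - 1)%nat, u (j - 1)%nat))
  /\ u 0%nat = 0
  /\ p n = 0
  /\ (forall j : nat, (j <= n - 1)%nat -> 0 < p j).

Definition golden : R := (1 + sqrt 5) / 2.

Definition dist_end (n j : nat) : nat := Nat.min j (n - j).

(* Main.v *)
Require Import Defs.
From Stdlib Require Import Reals Lra Lia Psatz.
Open Scope R_scope.

Definition Tr (n : nat) (p d : nat -> R) : Prop :=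
  d 0%nat = 1 /\ p n = 0 /\ (forall j, (j < n)%nat -> 0 < p j) /\
  (forall j, (j < n)%nat -> d (S j) = d j - p j + / p j /\ p (S j) = p j * (1 - d (S j))).

Lemma inv_gt1 x : 0 < x -> x < 1 -> 1 < / x.
Proof. intros. assert (x * / x = 1) by (field; lra). nra. Qed.

Lemma inv_le1 x : 1 <= x -> / x <= 1.
Proof. intros. rewrite <- Rinv_1. apply Rinv_le_contravar; lra. Qed.

Lemma traj_Tr n p u : (1 <= n)%nat -> is_trajectory n p u -> Tr n p (fun j => 1 - p j * u j).
Proof.
  intros Hn [Hrec [Hu0 [Hpn Hpos]]].
  split; [rewrite Hu0; ring|]. split; [exact Hpn|]. split.
  - intros j Hj; apply Hpos; lia.
  - intros j Hj. assert (Hpj : 0 < p j) by (apply Hpos; lia).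
    pose proof (Hrec (S j) ltac:(lia)) as e.
    replace (S j - 1)%nat with j in e by lia.
    unfold Phi in e. injection e as e1 e2.
    split.
    + rewrite e1, e2. field. lra.
    + rewrite e2. field. lra.
Qed.

Lemma Tr_stepp n p d j : Tr n p d -> (j < n)%nat -> p (S j) = p j - p j * d j + p j * p j - 1.
Proof. intros [_ [_ [Hpos Hrec]]] Hj. destruct (Hrec j Hj) as [H1 H2]. rewrite H2, H1.
  specialize (Hpos j Hj). field. lra. Qed.

Lemma Tr_pnonneg n p d j : Tr n p d -> (j <= n)%nat -> 0 <= p j.
Proof. intros [_ [Hpn [Hpos _]]] Hj. destruct (Nat.eq_dec j n). subst; lra.
  left; apply Hpos; lia. Qed.

Lemma Tr_dle1 n p d j : Tr n p d -> (j <= n)%nat -> d j <= 1.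
Proof. intros HT Hj. pose proof HT as [Hd0 [_ [Hpos Hrec]]]. destruct j. lra.
  destruct (Hrec j ltac:(lia)) as [_ H2]. pose proof (Tr_pnonneg n p d (S j) HT Hj).
  specialize (Hpos j ltac:(lia)). nra. Qed.

Lemma Tr_dn n p d : (1 <= n)%nat -> Tr n p d -> d n = 1.
Proof. intros Hn [_ [Hpn [Hpos Hrec]]]. destruct n as [|m]. lia.
  destruct (Hrec m ltac:(lia)) as [_ H2]. specialize (Hpos m ltac:(lia)).
  rewrite Hpn in H2. symmetry in H2. apply Rmult_integral in H2. destruct H2; lra. Qed.

Lemma Tr_dpos n p d j : Tr n p d -> (j <= n)%nat -> 0 < d j.
Proof.
  intros HT Hj. pose proof HT as [Hd0 [Hpn [Hpos Hrec]]].
  destruct (Rlt_or_le 0 (d j)) as [H|H]; auto. exfalso.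
  destruct (Rle_or_lt 1 (p j)) as [Hp|Hp].
  - assert (forall m, (j + m <= n)%nat -> 1 <= p (j+m)%nat /\ d (j+m)%nat <= 0) as F.
    { induction m. rewrite Nat.add_0_r. auto.
      intros Hm. destruct IHm as [IH1 IH2]. lia.
      rewrite Nat.add_succ_r. destruct (Hrec (j+m)%nat ltac:(lia)) as [H1 H2].
      pose proof (inv_le1 _ IH1). split; [|lra]. rewrite H2. nra. }
    destruct (F (n - j)%nat ltac:(lia)) as [F1 _]. replace (j + (n-j))%nat with n in F1 by lia. lra.
  - assert (forall m, (m <= j)%nat -> d (j - m)%nat <= 0 /\ p (j - m)%nat < 1) as F.
    { induction m. rewrite Nat.sub_0_r. auto.
      intros Hm. destruct IHm as [IH1 IH2]. lia.
      assert (Ei : (j - m)%nat = S (j - S m)) by lia. rewrite Ei in IH1, IH2.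
      set (i := (j - S m)%nat) in *.
      destruct (Hrec i ltac:(lia)) as [H1 H2]. specialize (Hpos i ltac:(lia)).
      assert (p i < 1) by nra. pose proof (inv_gt1 _ Hpos H0). split; lra. }
    destruct (F j ltac:(lia)) as [F1 _]. rewrite Nat.sub_diag in F1. lra.
Qed.

Lemma Tr_decr n p d i m : Tr n p d -> (i + m <= n)%nat -> p (i + m)%nat <= p i.
Proof.
  intros HT. pose proof HT as [Hd0 [Hpn [Hpos Hrec]]]. induction m; intros Hm.
  rewrite Nat.add_0_r; lra.
  rewrite Nat.add_succ_r. destruct (Hrec (i+m)%nat ltac:(lia)) as [_ H2].
  pose proof (Tr_dpos n p d (S (i+m)) HT ltac:(lia)). specialize (Hpos (i+m)%nat ltac:(lia)).
  specialize (IHm ltac:(lia)). nra.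
Qed.

Lemma Tr_lt n p d P D : Tr n p d -> Tr n P D -> p 0%nat < P 0%nat ->
  forall j, (j <= n)%nat -> p j < P j /\ D j <= d j.
Proof.
  intros HT HT2 H0. pose proof HT as [Hd0 [Hpn [Hpos Hrec]]].
  pose proof HT2 as [HD0 [HPn [HPos HRec]]].
  induction j; intros Hj. split; lra.
  destruct IHj as [I1 I2]. lia.
  pose proof (Tr_stepp n p d j HT ltac:(lia)) as S1.
  pose proof (Tr_stepp n P D j HT2 ltac:(lia)) as S2.
  destruct (Hrec j ltac:(lia)) as [R1 _]. destruct (HRec j ltac:(lia)) as [R2 _].
  specialize (Hpos j ltac:(lia)). specialize (HPos j ltac:(lia)).
  pose proof (Tr_dle1 n p d j HT ltac:(lia)) as Hdl.
  assert (/ P j <= / p j) by (apply Rinv_le_contravar; lra).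
  split.
  - rewrite S1, S2.
    assert (P j * D j <= P j * d j) by nra.
    assert (0 <= (P j - p j) * (1 - d j)) by nra.
    assert (0 < (P j - p j) * (P j + p j)) by nra. nra.
  - rewrite R1, R2. lra.
Qed.

Lemma Tr_uniq n p d P D : Tr n p d -> Tr n P D ->
  forall j, (j <= n)%nat -> p j = P j /\ d j = D j.
Proof.
  intros HT HT2.
  assert (E0 : p 0%nat = P 0%nat).
  { pose proof HT as [_ [Hpn _]]. pose proof HT2 as [_ [HPn _]].
    destruct (Rtotal_order (p 0%nat) (P 0%nat)) as [H|[H|H]]; auto; exfalso.
    - destruct (Tr_lt n p d P D HT HT2 H n (le_n n)). lra.
    - destruct (Tr_lt n P D p d HT2 HT H n (le_n n)). lra. }
  pose proof HT as [Hd0 [Hpn [Hpos Hrec]]].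
  pose proof HT2 as [HD0 [HPn [HPos HRec]]].
  induction j; intros Hj. split; lra.
  destruct IHj as [I1 I2]. lia.
  pose proof (Tr_stepp n p d j HT ltac:(lia)) as S1.
  pose proof (Tr_stepp n P D j HT2 ltac:(lia)) as S2.
  destruct (Hrec j ltac:(lia)) as [R1 _]. destruct (HRec j ltac:(lia)) as [R2 _].
  rewrite S1, S2, R1, R2, I1, I2. split; reflexivity.
Qed.

Definition revp (n : nat) (p : nat -> R) (j : nat) : R :=
  if Nat.ltb j n then / p (n - 1 - j)%nat else 0.
Definition revd (n : nat) (d : nat -> R) (j : nat) : R := d (n - j)%nat.

Lemma Tr_rev n p d : (1 <= n)%nat -> Tr n p d -> Tr n (revp n p) (revd n d).
Proof.
  intros Hn HT. pose proof HT as [Hd0 [Hpn [Hpos Hrec]]].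
  unfold Tr, revp, revd. split; [|split; [|split]].
  - rewrite Nat.sub_0_r. apply (Tr_dn n p d Hn HT).
  - rewrite Nat.ltb_irrefl. reflexivity.
  - intros j Hj. rewrite (proj2 (Nat.ltb_lt j n) Hj). apply Rinv_0_lt_compat, Hpos. lia.
  - intros j Hj. rewrite (proj2 (Nat.ltb_lt j n) Hj). split.
    + replace (n - j)%nat with (S (n - 1 - j)) by lia.
      replace (n - S j)%nat with (n - 1 - j)%nat by lia.
      destruct (Hrec (n - 1 - j)%nat ltac:(lia)) as [H1 _].
      rewrite Rinv_inv. lra.
    + destruct (Nat.ltb (S j) n) eqn:E.
      * apply Nat.ltb_lt in E.
        replace (n - 1 - j)%nat with (S (n - 1 - S j)) by lia.
        replace (n - S j)%nat with (S (n - 1 - S j)) by lia.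
        set (i := (n - 1 - S j)%nat).
        destruct (Hrec i ltac:(lia)) as [_ H2].
        assert (0 < p (S i)) by (apply Hpos; lia).
        assert (0 < p i) by (apply Hpos; lia).
        assert (1 - d (S i) <> 0). { intro Hc. rewrite Hc in H2. lra. }
        rewrite H2. field. split; lra.
      * apply Nat.ltb_ge in E. replace (n - 1 - j)%nat with 0%nat by lia.
        replace (n - S j)%nat with 0%nat by lia. rewrite Hd0. ring.
Qed.

Lemma Tr_sym n p d : (1 <= n)%nat -> Tr n p d ->
  (forall j, (j < n)%nat -> p j = / p (n - 1 - j)%nat) /\
  (forall j, (j <= n)%nat -> d j = d (n - j)%nat).
Proof.
  intros Hn HT. pose proof (Tr_uniq n p d _ _ HT (Tr_rev n p d Hn HT)) as U.
  split.
  - intros j Hj. destruct (U j ltac:(lia)) as [U1 _]. rewrite U1. unfold revp.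
    rewrite (proj2 (Nat.ltb_lt j n) Hj). reflexivity.
  - intros j Hj. destruct (U j Hj) as [_ U2]. exact U2.
Qed.

Lemma Tr_ge1 n p d k : (1 <= n)%nat -> Tr n p d -> (2 * k + 1 <= n)%nat -> 1 <= p k.
Proof.
  intros Hn HT Hk. pose proof HT as [Hd0 [Hpn [Hpos Hrec]]].
  destruct (Tr_sym n p d Hn HT) as [S1 _].
  pose proof (Tr_decr n p d k (n - 1 - 2 * k) HT ltac:(lia)) as D1.
  replace (k + (n - 1 - 2 * k))%nat with (n - 1 - k)%nat in D1 by lia.
  rewrite (S1 (n - 1 - k)%nat ltac:(lia)) in D1.
  replace (n - 1 - (n - 1 - k))%nat with k in D1 by lia.
  specialize (Hpos k ltac:(lia)).
  assert (p k * / p k = 1) by (field; lra). nra.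
Qed.

Lemma inv_poly p d : 1 <= p -> d * (5 + 5 * p) <= 26 * (p - 1) ->
  1 <= p - p * d + p * p - 1 /\
  (p - (p - p * d + p * p - 1)) * (5 + 5 * (p - p * d + p * p - 1))
    <= 26 * p * ((p - p * d + p * p - 1) - 1).
Proof.
  intros Hp Hd.
  remember (p - p * d + p * p - 1) as p1 eqn:Ep1. remember (p - 1) as e eqn:Ee.
  remember (26 * e - d * (5 + 5 * p)) as t eqn:Et.
  assert (He : 0 <= e) by lra. assert (Ht : 0 <= t) by (subst; lra).
  assert (I1 : 5*(1+p)*(p1-1) = e*(4-e+5*e^2) + t*p) by (subst; ring).
  assert (I2 : (5*(1+p))^2 * (26*p*(p1-1) - (p-p1)*(5+5*p1)) =
     e*(440 + 280*e + 1540*e^2 + 2050*e^3 + 475*e^4 + 125*e^5)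
     + t*p*(360 + 430*e + 95*e^2 + 50*e^3) + 5*t^2*p^2) by (subst; ring).
  assert (0 <= e*(4-e+5*e^2)) by (apply Rmult_le_pos; nra).
  assert (0 <= t * p) by nra.
  assert (0 <= e*(440 + 280*e + 1540*e^2 + 2050*e^3 + 475*e^4 + 125*e^5)).
  { apply Rmult_le_pos; auto. assert (0 <= e^2) by nra. assert (0 <= e^3) by (simpl; nra).
    assert (0 <= e^4) by (simpl; nra). assert (0 <= e^5) by (simpl; nra). lra. }
  assert (0 <= t*p*(360 + 430*e + 95*e^2 + 50*e^3)).
  { apply Rmult_le_pos; auto. assert (0 <= e^2) by nra. assert (0 <= e^3) by (simpl; nra). lra. }
  assert (0 <= 5*t^2*p^2) by (assert (0 <= t^2) by nra; assert (0 <= p^2) by nra; nra).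
  split.
  - assert (0 < 5*(1+p)) by lra. nra.
  - assert (0 < (5*(1+p))^2) by (apply pow_lt; lra).
    assert (0 <= (5*(1+p))^2 * (26*p*(p1-1) - (p-p1)*(5+5*p1))) by lra.
    assert (0 <= 26*p*(p1-1) - (p-p1)*(5+5*p1)).
    { apply (Rmult_le_reg_l ((5*(1+p))^2)); auto. lra. }
    lra.
Qed.

Lemma contr p d p1 : 1 <= p -> p < 31/21 -> 26 * (p - 1) < d * (5 + 5 * p) ->
  p1 = p - p * d + p * p - 1 -> 0 < p1 -> 1 - / p1 <= (1 - / p) / 2.
Proof.
  intros Hp Hp2 Hd E Hp1.
  destruct (Rlt_or_le p1 1) as [H1|H1].
  - pose proof (inv_gt1 _ Hp1 H1). pose proof (inv_le1 _ Hp). lra.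
  - remember (p - 1) as e eqn:Ee. remember (26 * e - d * (5 + 5 * p)) as t eqn:Et.
    assert (I1 : (p1-1)*(1+p) = (e*(4-e+5*e^2) + t*p)/5) by (subst; field).
    assert (Ht : t <= 0) by (subst; lra).
    assert (He : 0 <= e <= 10/21) by lra.
    assert (e*(4-e+5*e^2) <= 5 * e) by nra.
    assert (t * p <= 0) by nra.
    assert (K : (p1-1)*(1+p) <= p - 1) by lra.
    assert (Eq : (1 - / p) / 2 - (1 - / p1) = ((p - 1) * p1 - 2 * (p1 - 1) * p) / (2 * p * p1))
      by (field; lra).
    assert (0 <= ((p - 1) * p1 - 2 * (p1 - 1) * p) / (2 * p * p1)).
    { unfold Rdiv; apply Rmult_le_pos; [nra | left; apply Rinv_0_lt_compat; nra]. }
    lra.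
Qed.

Lemma Tr_barrier n p d k : Tr n p d -> (k <= n)%nat -> 1 <= p k ->
  26 * (p k - 1) < d k * (5 + 5 * p k).
Proof.
  intros HT Hk Hp. pose proof HT as [Hd0 [Hpn [Hpos Hrec]]].
  destruct (Rlt_or_le (26 * (p k - 1)) (d k * (5 + 5 * p k))) as [H|H]; auto. exfalso.
  assert (forall m, (k + m <= n)%nat -> 1 <= p (k+m)%nat /\
            d (k+m)%nat * (5 + 5 * p (k+m)%nat) <= 26 * (p (k+m)%nat - 1)) as F.
  { induction m. rewrite Nat.add_0_r. auto.
    intros Hm. destruct IHm as [IH1 IH2]. lia.
    rewrite Nat.add_succ_r. set (i := (k+m)%nat) in *.
    pose proof (Tr_stepp n p d i HT ltac:(lia)) as S1.
    destruct (Hrec i ltac:(lia)) as [_ H2].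
    specialize (Hpos i ltac:(lia)).
    destruct (inv_poly (p i) (d i) IH1 IH2) as [J1 J2].
    rewrite <- S1 in J1, J2. split; auto.
    assert (Hd1 : p i - p (S i) = p i * d (S i)) by (rewrite H2; ring).
    rewrite Hd1 in J2.
    apply (Rmult_le_reg_l (p i)); auto. lra. }
  destruct (F (n - k)%nat ltac:(lia)) as [F1 _]. replace (k + (n-k))%nat with n in F1 by lia. lra.
Qed.

Lemma Tr_q n p d : (1 <= n)%nat -> Tr n p d ->
  p 0%nat < 31/21 /\
  forall k, (2 * k + 2 <= n)%nat -> 1 - / p k <= (2/3) * (/2) ^ (S k).
Proof.
  intros Hn HT. pose proof HT as [Hd0 [Hpn [Hpos Hrec]]].
  assert (P0 : p 0%nat < 31/21).
  { pose proof (Tr_barrier n p d 0 HT ltac:(lia) (Tr_ge1 n p d 0 Hn HT ltac:(lia))). rewrite Hd0 in H. lra. }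
  split; auto.
  induction k; intros Hk.
  - pose proof (Tr_ge1 n p d 0 Hn HT ltac:(lia)).
    assert (/ (3/2) <= / p 0%nat) by (apply Rinv_le_contravar; lra).
    assert (/ (3/2) = 2/3) by field. simpl. lra.
  - specialize (IHk ltac:(lia)).
    pose proof (Tr_ge1 n p d k Hn HT ltac:(lia)) as G.
    pose proof (Tr_decr n p d 0 k HT ltac:(lia)) as Dk. simpl in Dk.
    pose proof (Tr_barrier n p d k HT ltac:(lia) G) as B.
    pose proof (contr (p k) (d k) (p (S k)) G ltac:(lra) B (Tr_stepp n p d k HT ltac:(lia))
                  (Hpos (S k) ltac:(lia))) as C.
    change ((/2) ^ (S (S k))) with (/2 * (/2) ^ (S k)). lra.
Qed.

Lemma golden_ge : 4/3 <= golden.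
Proof.
  unfold golden. assert (5/3 <= sqrt 5).
  { rewrite <- (sqrt_square (5/3)) by lra. apply sqrt_le_1_alt. lra. }
  lra.
Qed.

Lemma Tr_fh n p d i : (1 <= n)%nat -> Tr n p d -> (2 * i + 1 <= n)%nat ->
  Rabs (p i - 1) <= (/2) ^ i /\ 0 < d i /\ d i <= golden * (/2) ^ i.
Proof.
  intros Hn HT Hi. pose proof HT as [Hd0 [Hpn [Hpos Hrec]]].
  destruct (Tr_q n p d Hn HT) as [P0 Q].
  pose proof golden_ge as Gg.
  pose proof (Tr_ge1 n p d i Hn HT Hi) as G.
  assert (Hr : 0 < (/2) ^ i) by (apply pow_lt; lra).
  split; [|split].
  - rewrite Rabs_right by lra.
    destruct (Nat.eq_dec (2 * i + 1) n) as [Ei|Ei].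
    + destruct (Tr_sym n p d Hn HT) as [S1 _].
      pose proof (S1 i ltac:(lia)) as Si. replace (n - 1 - i)%nat with i in Si by lia.
      specialize (Hpos i ltac:(lia)).
      assert (p i * / p i = 1) by (field; lra). assert (p i = 1) by nra. lra.
    + pose proof (Q i ltac:(lia)) as Qi. change ((/2) ^ (S i)) with (/2 * (/2) ^ i) in Qi.
      pose proof (Tr_decr n p d 0 i HT ltac:(lia)) as Dk. simpl in Dk.
      specialize (Hpos i ltac:(lia)).
      assert (p i - 1 = p i * (1 - / p i)) by (field; lra).
      pose proof (inv_le1 _ G). nra.
  - apply (Tr_dpos n p d i HT). lia.
  - destruct i as [|k].
    + rewrite Hd0. simpl. lra.
    + destruct (Hrec k ltac:(lia)) as [_ H2].
      pose proof (Hpos k ltac:(lia)) as Pk.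
      assert (/ p k <= 1 - d (S k)).
      { assert (/ p k * p (S k) = 1 - d (S k)) by (rewrite H2; field; lra).
        assert (0 < / p k) by (apply Rinv_0_lt_compat; lra). nra. }
      pose proof (Q k ltac:(lia)). nra.
Qed.

Theorem lemma7 (n : nat) (p u : nat -> R) :
  (1 <= n)%nat ->
  is_trajectory n p u ->
  forall j : nat, (j <= n)%nat ->
    Rabs (p j - 1) <= (/ 2) ^ (dist_end n j)
    /\ 0 < 1 - p j * u j
    /\ 1 - p j * u j <= golden * (/ 2) ^ (dist_end n j).
Proof.
  intros Hn HTr j Hj.
  pose proof (traj_Tr n p u Hn HTr) as HT.
  set (d := fun j => 1 - p j * u j) in HT.
  change (1 - p j * u j) with (d j).
  pose proof HT as [Hd0 [Hpn [Hpos Hrec]]].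
  destruct (Tr_q n p d Hn HT) as [P0 Q].
  destruct (Tr_sym n p d Hn HT) as [S1 S2].
  pose proof golden_ge as Gg.
  unfold dist_end.
  destruct (Compare_dec.le_lt_dec (2 * j + 1) n) as [A|A].
  - rewrite Nat.min_l by lia. apply (Tr_fh n p d j Hn HT A).
  - destruct (Nat.eq_dec (2 * j) n) as [B|B].
    + rewrite Nat.min_l by lia.
      destruct j as [|k]. lia.
      pose proof (S1 (S k) ltac:(lia)) as Sk. replace (n - 1 - S k)%nat with k in Sk by lia.
      pose proof (Q k ltac:(lia)) as Qk.
      pose proof (Tr_ge1 n p d k Hn HT ltac:(lia)) as G.
      pose proof (inv_le1 _ G).
      pose proof (Hpos k ltac:(lia)) as Pk.
      assert (0 < / p k) by (apply Rinv_0_lt_compat; lra).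
      assert (Hr : 0 < (/2) ^ (S k)) by (apply pow_lt; lra).
      destruct (Hrec k ltac:(lia)) as [_ H2].
      assert (Hd : d (S k) = 1 - / p k * / p k).
      { assert (1 - d (S k) = p (S k) * / p k) by (rewrite H2; field; lra). rewrite Sk in H1. lra. }
      split; [|split].
      * rewrite Sk. rewrite Rabs_left1 by lra. lra.
      * apply (Tr_dpos n p d (S k) HT). lia.
      * rewrite Hd. nra.
    + rewrite Nat.min_r by lia.
      set (i := (n - j)%nat).
      destruct (Tr_fh n p d i Hn HT ltac:(unfold i; lia)) as [_ [Di1 Di2]].
      rewrite (S2 j Hj). fold i. split; [|split; auto].
      destruct (Nat.eq_dec j n) as [E|E].
      * subst i. rewrite E, Hpn, Nat.sub_diag. simpl. rewrite Rabs_left1 by lra. lra.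
      * pose proof (S1 j ltac:(lia)) as Sj.
        set (k := (n - 1 - j)%nat) in Sj.
        assert (Ei : i = S k) by (unfold i, k; lia). rewrite Ei.
        pose proof (Q k ltac:(unfold k; lia)) as Qk.
        pose proof (Tr_ge1 n p d k Hn HT ltac:(unfold k; lia)) as G.
        pose proof (inv_le1 _ G).
        assert (Hr : 0 < (/2) ^ (S k)) by (apply pow_lt; lra).
        rewrite Sj. rewrite Rabs_left1 by lra. lra.
Qed.
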